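(* Let $u$ be a half-activated vertex of a graph $G$. Then there exists a half-activated vertex of $G$ adjacent to $u$.
   Context: For a finite simple graph $G$ with vertex set $\{v_1,\dots,v_n\}$, the closed adjacency matrix $N(G)$ is the $n\times n$ matrix over $\mathbb{Z}_2$ whose $(i,j)$ entry is $1$ iff $i=j$ or $v_i$ is adjacent to $v_j$. Elements of $\operatorname{Ker}(N(G))$ are null patterns. A vertex $v$ is half-activated if $\boldsymbol{\ell}(v)=1$ for some null pattern $\boldsymbol{\ell}$. *)

(* Defs.v *)
From mathcomp Require Import all_boot all_order all_algebra.
Set Implicit Arguments. Unset Strict Implicit. Unset Printing Implicit Defensive.
Import GRing.Theory.
Local Open Scope ring_scope.

Definition simple_graph (n : nat) (adj : rel 'I_n) : Prop :=
  symmetric adj /\ irreflexive adj.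

Definition closed_adj (n : nat) (adj : rel 'I_n) : 'M['F_2]_n :=
  \matrix_(i, j) (if (i == j) || adj i j then 1 else 0).

Definition null_pattern (n : nat) (adj : rel 'I_n) (l : 'cV['F_2]_n) : Prop :=
  closed_adj adj *m l = 0.

Definition half_activated (n : nat) (adj : rel 'I_n) (v : 'I_n) : Prop :=
  exists l : 'cV['F_2]_n, null_pattern adj l /\ l v 0 = 1.

(* Main.v *)
Require Import Defs.
From mathcomp Require Import all_boot all_order all_algebra.
Import GRing.Theory.
Local Open Scope ring_scope.

Lemma F2_cases (x : 'F_2) : x != 1 -> x = 0.
Proof. by case: x => [[|[|m]] Hm] //= _; apply/val_inj. Qed.

Theorem lemma4p1 (n : nat) (adj : rel 'I_n) (u : 'I_n) :
  simple_graph adj -> half_activated adj u ->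
  exists v : 'I_n, adj u v /\ half_activated adj v.
Proof.
move=> [Hsym Hirr] [l [Hl Hu]]; rewrite /null_pattern in Hl.
case: (pickP (fun v => adj u v && (l v 0 == 1))) => [v /andP [Huv /eqP Hv]|H].
  by exists v; split => //; exists l.
have := congr1 (fun M : 'cV['F_2]_n => M u 0) Hl; rewrite /= !mxE (bigD1 u) //= /closed_adj mxE eqxx /= mul1r Hu.
rewrite big1 ?addr0; first by move=> h; have := h; rewrite /= => /eqP; rewrite oner_eq0.
move=> j Hj; rewrite mxE eq_sym (negbTE Hj) /=.
case Ha: (adj u j); last by rewrite mul0r.
have := H j; rewrite /= Ha /= => /negbT /F2_cases ->; by rewrite mulr0.
Qed.
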